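(* Let $f$ satisfy the hypotheses of Theorem 1 (bounded below by $f^*$, smooth with constants $L_1,\dots,L_d$, $\bar L=\frac1d\sum_iL_i$), and suppose that at every $x$ the estimator $\hat g(x)$ is unbiased and each coordinate $\hat g_i(x)$ has a unimodal distribution symmetric about $g_i(x)$ with variance $\sigma_i^2(x)$. Run signSGD $x_{k+1}=x_k-\gamma\,\mathrm{sign}\,\hat g(x_k)$ for $K\ge1$ iterations with constant step $\gamma=\sqrt{\frac{2(f(x_0)-f^* )}{d\bar LK}}$ (assume $f(x_0)>f^*$). Writing $g_k=\nabla f(x_k)$, $\sigma_i=\sigma_i(x_k)$ and $H_k=\{i:\sigma_i<\frac{\sqrt3}{2}|g_{k,i}|\}$, one has $$\frac1K\sum_{k=0}^{K-1}\mathbb{E}\left[\sum_{i\in H_k}|g_{k,i}|+\sum_{i\notin H_k}\frac{g_{k,i}^2}{\sigma_i}\right]\le5\sqrt{\frac{d\bar L(f(x_0)-f^* )}{K}}.$$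
   Context: $\mathrm{sign}\,t=1,0,-1$ for $t>0,t=0,t<0$, entrywise. Convention: a term $g_{k,i}^2/\sigma_i$ with $g_{k,i}=\sigma_i=0$ is taken to be $0$. *)

(* Defs.v *)
From HB Require Import structures.
From mathcomp Require Import all_boot all_order all_algebra.
From mathcomp Require Import all_classical all_reals all_analysis.
Set Implicit Arguments. Unset Strict Implicit. Unset Printing Implicit Defensive.
Import Order.TTheory GRing.Theory Num.Theory.
Import numFieldNormedType.Exports.
Local Open Scope classical_set_scope.
Local Open Scope ring_scope.

Definition grad {R : realType} {d : nat} (f : 'rV[R]_d -> R) (x : 'rV[R]_d)
  : 'rV[R]_d := \row_i ('d f x (delta_mx 0 i)).

Definition coord_smooth {R : realType} {d : nat} (f : 'rV[R]_d -> R)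
  (L : 'I_d -> R) :=
  forall x y : 'rV[R]_d,
    `| f y - (f x + \sum_i grad f x 0 i * (y 0 i - x 0 i)) |
      <= 2^-1 * \sum_i L i * (y 0 i - x 0 i) ^+ 2.

Definition cdfR {dT} {T : measurableType dT} {R : realType}
  (P : probability T R) (X : T -> R) (t : R) : R :=
  fine (P [set w | X w <= t]).

Definition symmetric_about {dT} {T : measurableType dT} {R : realType}
  (P : probability T R) (X : T -> R) (m : R) :=
  forall t : R, P [set w | X w <= m - t] = P [set w | m + t <= X w].

(* Unimodal about m (Khintchine): the cdf is convex on (-oo, m) and
   concave on (m, +oo). *)
Definition unimodal_about {dT} {T : measurableType dT} {R : realType}
  (P : probability T R) (X : T -> R) (m : R) :=
  (forall a b l : R, a < m -> b < m -> 0 <= l <= 1 ->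
     cdfR P X (l * a + (1 - l) * b)
       <= l * cdfR P X a + (1 - l) * cdfR P X b) /\
  (forall a b l : R, m < a -> m < b -> 0 <= l <= 1 ->
     l * cdfR P X a + (1 - l) * cdfR P X b
       <= cdfR P X (l * a + (1 - l) * b)).

Definition sgv {R : realType} {d : nat} (v : 'rV[R]_d) : 'rV[R]_d :=
  map_mx Num.sg v.

(* One step of signSGD as a Markov transition operator on nonnegative
   observables: (step h)(x) = E[ h(x - gamma * sign ghat(x)) ], the noise
   of the oracle being drawn afresh (from P) at each iteration. *)
Definition signsgd_step {dT} {T : measurableType dT} {R : realType} {d : nat}
  (P : probability T R) (ghat : 'rV[R]_d -> T -> 'rV[R]_d) (gamma : R)
  (h : 'rV[R]_d -> \bar R) (x : 'rV[R]_d) : \bar R :=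
  (\int[P]_w h (x - gamma *: sgv (ghat x w))%R)%E.

Definition signsgd_expect {dT} {T : measurableType dT} {R : realType} {d : nat}
  (P : probability T R) (ghat : 'rV[R]_d -> T -> 'rV[R]_d) (gamma : R)
  (k : nat) (h : 'rV[R]_d -> \bar R) (x0 : 'rV[R]_d) : \bar R :=
  iter k (signsgd_step P ghat gamma) h x0.

(* The per-iterate quantity
   sum_{i in H} |g_i| + sum_{i notin H} g_i^2 / sigma_i,
   H = {i : sigma_i < sqrt 3 / 2 * |g_i|}  (0/0 = 0 since 0^-1 = 0). *)
Definition signsgd_measure {R : realType} {d : nat}
  (g sigma : 'rV[R]_d -> 'rV[R]_d) (x : 'rV[R]_d) : R :=
  \sum_(i < d)
    (if sigma x 0 i < Num.sqrt 3 / 2 * `|g x 0 i|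
     then `|g x 0 i|
     else (g x 0 i) ^+ 2 / sigma x 0 i).

(* Main.v *)
Require Import Defs.
From HB Require Import structures.
From mathcomp Require Import all_boot all_order all_algebra.
From mathcomp Require Import all_classical all_reals all_analysis.
From mathcomp Require Import ring lra.
Set Implicit Arguments. Unset Strict Implicit.
Import Order.TTheory GRing.Theory Num.Theory.
Import numFieldNormedType.Exports.
Local Open Scope classical_set_scope.
Local Open Scope ring_scope.

Section Prob.
Context (R : realType) (dT : measure_display) (T : measurableType dT)
  (P : probability T R).

Definition pr (A : set T) : R := fine (P A).

Lemma prE A : measurable A -> P A = (pr A)%:E.
Proof. by move=> mA; rewrite /pr fineK// fin_num_measure. Qed.

Lemma pr_ge0 A : 0 <= pr A.
Proof. by rewrite /pr fine_ge0. Qed.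

Lemma pr_le1 A : measurable A -> pr A <= 1.
Proof. by move=> mA; rewrite -lee_fin -prE// probability_le1. Qed.

Lemma prU A B : measurable A -> measurable B -> A `&` B = set0 ->
  pr (A `|` B) = pr A + pr B.
Proof.
move=> mA mB AB; apply/eqP; rewrite -eqe EFinD -!prE//; last exact: measurableU.
by rewrite measureU.
Qed.

Lemma prC A : measurable A -> pr (~` A) = 1 - pr A.
Proof.
move=> mA; apply/eqP; rewrite -eqe EFinB -!prE//; last exact: measurableC.
by rewrite probability_setC.
Qed.

Lemma pr_le A B : measurable A -> measurable B -> A `<=` B -> pr A <= pr B.
Proof.
move=> mA mB AB; rewrite -lee_fin -!prE//; by apply: le_measure => //; rewrite inE.
Qed.

Lemma pr_setT : pr setT = 1.
Proof. by rewrite /pr probability_setT. Qed.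

Context (X : T -> R) (mX : measurable_fun setT X).

Lemma mle c : measurable [set w | X w <= c].
Proof.
have := @measurable_fun_le _ _ _ setT X (fun=> c) measurableT mX (measurable_cst _).
by rewrite setTI.
Qed.

Lemma mge c : measurable [set w | c <= X w].
Proof.
have := @measurable_fun_le _ _ _ setT (fun=> c) X measurableT (measurable_cst _) mX.
by rewrite setTI.
Qed.

Lemma mlt c : measurable [set w | X w < c].
Proof.
rewrite (_ : [set w | X w < c] = ~` [set w | c <= X w]); first exact/measurableC/mge.
by apply/seteqP; split => w /=; rewrite ltNge => /negP.
Qed.

Lemma mgt c : measurable [set w | c < X w].
Proof.
rewrite (_ : [set w | c < X w] = ~` [set w | X w <= c]); first exact/measurableC/mle.
by apply/seteqP; split => w /=; rewrite ltNge => /negP.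
Qed.

End Prob.

Section Core.
Context (R : realType) (dT : measure_display) (T : measurableType dT)
  (P : probability T R).
Context (X : T -> R) (mX : measurable_fun setT X) (m s2 : R).
Hypothesis EX : ('E_P[X] = m%:E)%E.
Hypothesis VX : ('V_P[X] = (s2 ^+ 2)%:E)%E.
Hypothesis s20 : 0 <= s2.
Hypothesis sym : symmetric_about P X m.
Hypothesis uni : unimodal_about P X m.

Lemma cdfRE t : cdfR P X t = pr P [set w | X w <= t].
Proof. by []. Qed.

Lemma cheb2 s : 0 < s -> 2 * cdfR P X (m - s) <= s2 ^+ 2 / s ^+ 2.
Proof.
move=> s0.
pose XX : {RV P >-> R} := mfun_Sub (mem_set mX).
have := chebyshev XX s0.
rewrite /= EX VX /=.
set C := [set x | _].
have CE : C = [set w | X w <= m - s] `|` [set w | m + s <= X w].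
  apply/seteqP; split => w.
    by rewrite /C /= ler_normr => /orP [] H; [right|left]; lra.
  by move=> [] /= H; rewrite /C /= ler_normr; apply/orP; [right|left]; lra.
have mA := mle mX (m - s); have mB := mge mX (m + s).
rewrite CE prE; last exact: measurableU.
rewrite prU //; last first.
  by apply/seteqP; split => w //= [] ? ?; lra.
have : pr P [set w | X w <= m - s] = pr P [set w | m + s <= X w].
  by rewrite /pr sym.
move=> hAB; rewrite -EFinM lee_fin cdfRE => H.
rewrite (_ : s2^+2/s^+2 = s^-2 * s2^+2); last by rewrite mulrC.
lra.
Qed.

Lemma half a : a < m -> 2 * cdfR P X a <= 1.
Proof.
move=> am.
have mA := mle mX a; have mB := mge mX (m + (m - a)).
have : pr P ([set w | X w <= a] `|` [set w | m + (m - a) <= X w]) <= 1.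
  by apply: pr_le1; exact: measurableU.
rewrite prU //; last by apply/seteqP; split => w //= [] ? ?; lra.
have -> : pr P [set w | m + (m - a) <= X w] = pr P [set w | X w <= a].
  rewrite /pr -sym; congr (fine (P _)); apply/seteqP; split => w /=; lra.
by rewrite cdfRE; lra.
Qed.

Lemma setCge c : ~` [set w | c <= X w] = [set w | X w < c].
Proof. by apply/seteqP; split => w /=; rewrite ltNge => /negP. Qed.

Lemma setCle c : ~` [set w | X w <= c] = [set w | c < X w].
Proof. by apply/seteqP; split => w /=; rewrite ltNge => /negP. Qed.

Lemma lower : 0 < `|m| ->
  `|m| * (1 - 2 * cdfR P X (m - `|m|)) <=
  m * (pr P [set w | 0 < X w] - pr P [set w | X w < 0]).
Proof.
move=> t0; case: (ltrgtP m 0) => hm; last by move: t0; rewrite hm normr0 ltxx.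
- rewrite ltr0_norm // opprK.
  have -> : cdfR P X (m + m) = pr P [set w | 0 <= X w].
    rewrite cdfRE /pr (_ : m + m = m - (- m)); last by ring.
    rewrite sym; congr (fine (P _)); apply/seteqP; split => w /=; lra.
  rewrite -setCge prC; last exact: mge.
  have : pr P [set w | 0 < X w] <= pr P [set w | 0 <= X w].
    apply: pr_le; [exact: mgt|exact: mge|by move=> w /= /ltW].
  have := pr_ge0 P [set w | 0 <= X w].
  nra.
- rewrite gtr0_norm // subrr.
  rewrite -setCle prC; last exact: mle.
  have : pr P [set w | X w < 0] <= pr P [set w | X w <= 0].
    apply: pr_le; [exact: mlt|exact: mle|by move=> w /= /ltW].
  rewrite cdfRE.
  have := pr_ge0 P [set w | X w <= 0].
  nra.
Qed.

Lemma core :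
  3^-1 * (if s2 < Num.sqrt 3 / 2 * `|m| then `|m| else m ^+ 2 / s2) <=
  m * (pr P [set w | 0 < X w] - pr P [set w | X w < 0]).
Proof.
have s20' : (0:R) <= s2 by exact: s20.
set r := Num.sqrt 3.
have r0 : 0 <= r by exact: sqrtr_ge0.
have r2 : r ^+ 2 = 3 by rewrite sqr_sqrtr.
have r1 : 1 < r by nra.
have r2' : r <= 2 by nra.
have [m0|t0] := eqVneq m 0.
  rewrite m0 normr0 mulr0 mul0r; case: ifP => _.
    by rewrite mulr0.
  by rewrite expr0n /= mul0r mulr0.
have tp : 0 < `|m| by rewrite normr_gt0.
apply: le_trans (lower tp).
have tm : m ^+ 2 = `|m| ^+ 2 by rewrite real_normK // num_real.
have [t Ht] : {t : R | `|m| = t} by exists `|m|.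
rewrite Ht in tp tm *.
have {tp}tp : (0:R) < t by exact: tp.
have [hst|hts] := leP (2 * s2) t.
- have rt : 0 < (r - 1) * t by apply: mulr_gt0 => //; lra.
  have cond : s2 < r / 2 * t by nra.
  rewrite cond.
  have := cheb2 tp.
  have : s2 ^+ 2 / t ^+ 2 <= 4^-1.
    rewrite ler_pdivrMr; last by rewrite exprn_gt0.
    have h1 : 0 <= t/2 - s2 by lra.
    have h2 : 0 <= t/2 + s2 by lra.
    have := mulr_ge0 h1 h2.
    rewrite !expr2; lra.
  nra.
- have s0 : 0 < s2 by nra.
  have : 3^-1 * (if s2 < r / 2 * t then t else m ^+ 2 / s2) <= 3^-1 * (t ^+ 2 / s2).
    rewrite ler_pM2l; last by [].
    case: ifP => h; last by rewrite tm.
    rewrite ler_pdivlMr //; nra.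
  move/le_trans; apply.
  have [e He] : {e : R | e = t / 9} by eexists.
  have [s Hs] : {s : R | s = 2 * s2} by eexists.
  have se : 0 < s - e by lra.
  have [l Hl] : {l : R | l = (s - t) / (s - e)} by eexists.
  have l1 : (1 - l) * (s - e) = t - e.
    by rewrite Hl; field; lra.
  have l0 : 0 <= l by rewrite Hl divr_ge0 //; lra.
  have l1' : l <= 1 by rewrite Hl ler_pdivrMr //; lra.
  have hconv := uni.1 (m - e) (m - s) l.
  have := hconv ltac:(lra) ltac:(lra) ltac:(by rewrite l0 l1').
  have -> : l * (m - e) + (1 - l) * (m - s) = m - t.
    by rewrite Hl; field; lra.
  have ha := half (_ : m - e < m).
  have hb := cheb2 (_ : 0 < s).
  have hs : s2 ^+ 2 / s ^+ 2 = 4^-1 by rewrite Hs; field; lra.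
  rewrite hs in hb.
  move=> hc.
  have h1 : 1 - 2 * cdfR P X (m - t) >= 3/4 * (1 - l).
    have := ha ltac:(lra).
    have := hb ltac:(lra).
    nra.
  rewrite mulrA ler_pdivrMr //.
  have hA : 0 <= (t * s2) * ((1 - 2 * cdfR P X (m - t)) - 3/4 * (1 - l)).
    apply: mulr_ge0; [apply: mulr_ge0; lra|lra].
  have hB : 0 <= t * ((1 - l) * e).
    apply: mulr_ge0; [lra|apply: mulr_ge0; lra].
  have hC : t * ((1 - l) * (s - e)) = t * (t - e) by rewrite l1.
  rewrite Hs He in hC; rewrite He in hB.
  nra.
Qed.

End Core.

Definition o0 : 'I_3 := Ordinal (isT : (0 < 3)%N).
Definition o1 : 'I_3 := Ordinal (isT : (1 < 3)%N).
Definition o2 : 'I_3 := Ordinal (isT : (2 < 3)%N).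

Section Rep.
Context (R : realType).

Definition val3 (k : 'I_3) : R := (k : nat)%:R - 1.
Definition code3 (z : R) : 'I_3 := if 0 < z then o2 else if z == 0 then o1 else o0.

Lemma val3_code z : val3 (code3 z) = Num.sg z.
Proof.
rewrite /code3 /val3; have [z0|z0|->] := ltrgtP z 0.
- by rewrite ltr0_sg //=; lra.
- by rewrite gtr0_sg //=; lra.
- by rewrite sgr0 /=; lra.
Qed.

Lemma val3_inj : injective val3.
Proof.
move=> a b; rewrite /val3 => /(congr1 (fun u => u + 1)); rewrite !subrK.
by move/eqP; rewrite eqr_nat => /eqP /val_inj.
Qed.

Lemma val3E k : val3 k = (0 < val3 k)%R%:R - (val3 k < 0)%R%:R.
Proof.
case: k => [[|[|[|k]]] Hk] //; rewrite /val3 /=.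
- have -> : (0%:R - 1 : R) = -1 by lra.
  by rewrite ltrN10 ltr0N1 /=; lra.
- have -> : (1%:R - 1 : R) = 0 by lra.
  by rewrite ltxx /=; lra.
- have -> : (2%:R - 1 : R) = 1 by lra.
  by rewrite ltr01 ltr10 /=; lra.
Qed.

Lemma code3_val z : (code3 z : nat) = (if (0 < z)%R then 2%N else if z == 0 then 1%N else 0%N).
Proof. by rewrite /code3; case: ifP => //; case: ifP. Qed.

Context (dT : measure_display) (T : measurableType dT) (P : probability T R).
Context (d : nat) (ghat : 'rV[R]_d -> T -> 'rV[R]_d).
Hypothesis mg : forall x (i : 'I_d), measurable_fun setT (fun w => ghat x w 0 i).

Lemma mcode3 (X : T -> R) (mX : measurable_fun setT X) (k : 'I_3) :
  measurable [set w | code3 (X w) = k].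
Proof.
have -> : [set w | code3 (X w) = k] = [set w | (code3 (X w) : nat) = k].
  by apply/seteqP; split => w /= h; [rewrite h|apply: val_inj].
case: k => [[|[|[|k]]] Hk] //=.
- have -> : [set w | (code3 (X w) : nat) = 0%N] = [set w | X w < 0].
    apply/seteqP; split => w /=; rewrite code3_val.
      by case: ltrgtP.
    by move=> h; rewrite ltNge (ltW h) /= (negbTE (ltr0_neq0 h)).
  exact: mlt.
- have -> : [set w | (code3 (X w) : nat) = 1%N] = [set w | X w <= 0] `&` [set w | 0 <= X w].
    apply/seteqP; split => w /=; rewrite code3_val.
      by case: ltrgtP => // ->.
    move=> [h1 h2]; have -> : X w = 0 by apply/eqP; rewrite eq_le h1 h2.
    by rewrite ltxx eqxx.
  by apply: measurableI; [exact: mle|exact: mge].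
- have -> : [set w | (code3 (X w) : nat) = 2%N] = [set w | 0 < X w].
    apply/seteqP; split => w /=; rewrite code3_val.
      by case: ltrgtP.
    by move=> ->.
  exact: mgt.
Qed.

Definition vecs (s : {ffun 'I_d -> 'I_3}) : 'rV[R]_d := \row_i val3 (s i).
Definition codev x w : {ffun 'I_d -> 'I_3} := [ffun i => code3 (ghat x w 0 i)].
Definition Ev x s := [set w | codev x w = s].

Lemma vecs_inj : injective vecs.
Proof.
move=> s1 s2 /matrixP H; apply/ffunP => i; apply: val3_inj.
by have := H 0 i; rewrite !mxE.
Qed.

Lemma sgv_code x w : sgv (ghat x w) = vecs (codev x w).
Proof. by apply/matrixP => i j; rewrite !mxE ffunE val3_code (ord1 i). Qed.

Lemma mEv x s : measurable (Ev x s).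
Proof.
have -> : Ev x s = \bigcap_(i in [set: 'I_d]) [set w | code3 (ghat x w 0 i) = s i].
  apply/seteqP; split => w /=.
    by move=> <- i _; rewrite ffunE.
  by move=> h; apply/ffunP => i; rewrite ffunE; apply: h.
apply: fin_bigcap_measurable; first exact: finite_finset.
by move=> i _; apply: mcode3.
Qed.

Lemma rep x (psi : 'rV[R]_d -> R) : (forall v, 0 <= psi v) ->
  (\int[P]_w (psi (sgv (ghat x w)))%:E =
   (\sum_s pr P (Ev x s) * psi (vecs s))%:E)%E.
Proof.
move=> psi0.
transitivity (\int[P]_w (\sum_s ((psi (vecs s))%:E * (\1_(Ev x s) w)%:E)))%E.
  apply: eq_integral => w _; rewrite sgv_code (bigD1 (codev x w)) //=.
  rewrite indicE mem_set // mule1 big1 ?adde0 // => s hs.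
  rewrite indicE memNset ?mule0 //.
  by move=> h; move: hs; rewrite /Ev /= in h; rewrite h eqxx.
rewrite ge0_integral_sum //; last 2 first.
- move=> s; apply: measurable_funeM; apply/measurable_realfun.measurable_EFinP.
  exact/measurable_realfun.measurable_indic/mEv.
- move=> s w _; apply: mule_ge0; rewrite lee_fin; first exact: psi0.
  by rewrite indicE.
rewrite -sumEFin; apply: eq_bigr => s _.
rewrite (@ge0_integralZl _ _ _ P setT measurableT (fun w => (\1_(Ev x s) w)%:E)); last 3 first.
- apply/measurable_realfun.measurable_EFinP.
  exact/measurable_realfun.measurable_indic/mEv.
- by move=> w _; rewrite lee_fin indicE.
- by rewrite lee_fin.
rewrite integral_indic ?setIT ?mEv //.
apply/esym; rewrite -[LHS]/((pr P (Ev x s))%:E * (psi (vecs s))%:E)%E muleC.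
congr (_ * _)%E; rewrite /pr fineK //.
by apply: fin_num_measure; exact: mEv.
exact: mEv.
Qed.

End Rep.

Arguments vecs {R d} s.
Arguments val3 {R} k.

Section Qop.
Context (R : realType) (dT : measure_display) (T : measurableType dT) (P : probability T R).
Context (d : nat) (ghat : 'rV[R]_d -> T -> 'rV[R]_d) (gamma : R).
Hypothesis mg : forall x (i : 'I_d), measurable_fun setT (fun w => ghat x w 0 i).

Definition pp x s := pr P (Ev ghat x s).
Definition Q (r : 'rV[R]_d -> R) x :=
  \sum_(s : {ffun 'I_d -> 'I_3}) pp x s * r (x - gamma *: vecs s).

Lemma pp_ge0 x s : 0 <= pp x s.
Proof. exact: pr_ge0. Qed.

Lemma psum x : \sum_s pp x s = 1.
Proof.
have := rep P mg x (psi := fun=> 1) (fun=> ler01).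
under eq_bigr do rewrite mulr1.
rewrite integral_cst //= probability_setT mul1e => /esym/eqP.
by rewrite eqe => /eqP.
Qed.

Lemma stepE r : (forall y, 0 <= r y) ->
  signsgd_step P ghat gamma (fun y => (r y)%:E) = fun x => (Q r x)%:E.
Proof.
move=> r0; apply/funext => x; rewrite /signsgd_step.
exact: (rep P mg x (psi := fun v => r (x - gamma *: v))).
Qed.

Lemma Qlin r1 r2 a b :
  Q (fun y => a * r1 y + b * r2 y) = fun x => a * Q r1 x + b * Q r2 x.
Proof.
apply/funext => x; rewrite /Q !mulr_sumr -big_split; apply: eq_bigr => s _ /=.
ring.
Qed.

Lemma Qcst c : Q (fun=> c) = fun=> c.
Proof. by apply/funext => x; rewrite /Q -mulr_suml psum mul1r. Qed.

Lemma Qmono r1 r2 : (forall y, r1 y <= r2 y) -> forall x, Q r1 x <= Q r2 x.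
Proof.
move=> h x; apply: ler_sum => s _; apply: ler_wpM2l; [exact: pp_ge0|exact: h].
Qed.

Lemma iterQlin n r1 r2 a b :
  iter n Q (fun y => a * r1 y + b * r2 y) = fun x => a * iter n Q r1 x + b * iter n Q r2 x.
Proof. by elim: n => [//|n IH] /=; rewrite IH Qlin. Qed.

Lemma iterQcst n c : iter n Q (fun=> c) = fun=> c.
Proof. by elim: n => [//|n IH] /=; rewrite IH Qcst. Qed.

Lemma iterQmono n r1 r2 : (forall y, r1 y <= r2 y) -> forall x, iter n Q r1 x <= iter n Q r2 x.
Proof. by elim: n => [//|n IH] h /=; apply: Qmono; exact: IH. Qed.

Lemma iterQ_ge0 n r : (forall y, 0 <= r y) -> forall x, 0 <= iter n Q r x.
Proof.
move=> h x; have := iterQmono n (r1 := fun=> 0) h x.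
by rewrite iterQcst.
Qed.

Lemma iterE n r : (forall y, 0 <= r y) ->
  iter n (signsgd_step P ghat gamma) (fun y => (r y)%:E) = fun x => (iter n Q r x)%:E.
Proof.
move=> r0; elim: n => [//|n IH] /=; rewrite IH stepE //.
exact: iterQ_ge0.
Qed.

End Qop.

Section Marg.
Context (R : realType) (dT : measure_display) (T : measurableType dT) (P : probability T R).
Context (d : nat) (ghat : 'rV[R]_d -> T -> 'rV[R]_d).
Hypothesis mg : forall x (i : 'I_d), measurable_fun setT (fun w => ghat x w 0 i).

Lemma margP x i :
  \sum_s pp P ghat x s * (0 < (val3 (s i) : R))%R%:R = pr P [set w | 0 < ghat x w 0 i].
Proof.
have := rep P mg x (psi := fun v => (0 < v 0 i)%R%:R) (fun v => ler0n _ _).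
have -> : (\int[P]_w ((0 < sgv (ghat x w) 0 i)%R%:R)%:E =
    \int[P]_w (\1_([set w | 0 < ghat x w 0 i]) w)%:E)%E.
  apply: eq_integral => w _; rewrite indicE !mxE sgr_gt0.
  case: (boolP (w \in [set w0 | 0 < ghat x w0 0 i])) => [/set_mem/= -> //|h].
  case: (boolP (0 < ghat x w 0 i)) => // hh.
  by exfalso; move/negP: h; apply; exact: mem_set.
rewrite integral_indic ?setIT; last exact: mgt.
move=> h; rewrite /pr h /=.
  by apply: eq_bigr => s _; rewrite mxE.
exact: measurableT.
Qed.
Lemma margN x i :
  \sum_s pp P ghat x s * ((val3 (s i) : R) < 0)%R%:R = pr P [set w | ghat x w 0 i < 0].
Proof.
have := rep P mg x (psi := fun v => (v 0 i < 0)%R%:R) (fun v => ler0n _ _).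
have -> : (\int[P]_w ((sgv (ghat x w) 0 i < 0)%R%:R)%:E =
    \int[P]_w (\1_([set w | ghat x w 0 i < 0]) w)%:E)%E.
  apply: eq_integral => w _; rewrite indicE !mxE sgr_lt0.
  case: (boolP (w \in [set w0 | ghat x w0 0 i < 0])) => [/set_mem/= -> //|h].
  case: (boolP (ghat x w 0 i < 0)) => // hh.
  by exfalso; move/negP: h; apply; exact: mem_set.
rewrite integral_indic ?setIT; last exact: mlt.
move=> h; rewrite /pr h /=.
  by apply: eq_bigr => s _; rewrite mxE.
exact: measurableT.
Qed.
Lemma marg x i :
  \sum_s pp P ghat x s * (val3 (s i) : R) =
  pr P [set w | 0 < ghat x w 0 i] - pr P [set w | ghat x w 0 i < 0].
Proof.
rewrite -margP -margN -sumrB; apply: eq_bigr => s _.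
by rewrite {1}val3E mulrBr.
Qed.
End Marg.

Lemma val3_sq (R : realType) (k : 'I_3) : (val3 k : R) ^+ 2 <= 1.
Proof.
case: k => [[|[|[|k]]] Hk] //; rewrite /val3 /=.
- have -> : (0%:R - 1 : R) = -1 by lra. by rewrite sqrrN expr1n.
- have -> : (1%:R - 1 : R) = 0 by lra. by rewrite expr0n.
- have -> : (2%:R - 1 : R) = 1 by lra. by rewrite expr1n.
Qed.

Lemma smooth_step (R : realType) (d : nat) (f : 'rV[R]_d -> R) (L : 'I_d -> R)
  (hs : coord_smooth f L) (L0 : forall i, 0 <= L i) (gamma : R) (g0 : 0 <= gamma)
  x (v : 'rV[R]_d) (hv : forall i, v 0 i ^+ 2 <= 1) :
  f (x - gamma *: v) <= f x - gamma * \sum_i grad f x 0 i * v 0 i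
     + gamma ^+ 2 / 2 * \sum_i L i.
Proof.
have := hs x (x - gamma *: v).
have e1 : \sum_i grad f x 0 i * ((x - gamma *: v) 0 i - x 0 i) =
    - (gamma * \sum_i grad f x 0 i * v 0 i).
  rewrite mulr_sumr -sumrN; apply: eq_bigr => i _; rewrite !mxE; ring.
have e2 : \sum_i L i * ((x - gamma *: v) 0 i - x 0 i) ^+ 2 <= gamma ^+ 2 * \sum_i L i.
  rewrite mulr_sumr; apply: ler_sum => i _; rewrite !mxE.
  have -> : (x 0 i - gamma * v 0 i - x 0 i) ^+ 2 = gamma ^+ 2 * v 0 i ^+ 2 by ring.
  have h1 : 0 <= 1 - v 0 i ^+ 2 by rewrite subr_ge0.
  have := mulr_ge0 (mulr_ge0 (L0 i) (exprn_ge0 2 g0)) h1.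
  set a := v 0 i ^+ 2; set b := gamma ^+ 2.
  move=> h; rewrite -subr_ge0.
  have -> : b * L i - L i * (b * a) = L i * b * (1 - a) by ring.
  exact: h.
rewrite e1 => /ler_normlP [_ h].
have h2 := e2.
set S := \sum_i grad f x 0 i * v 0 i in e1 h *.
set SL := \sum_i L i * _ in h h2.
lra.
Qed.

Lemma perpoint (R : realType) (d : nat)
  (f : 'rV[R]_d -> R) (fstar : R) (L : 'I_d -> R)
  (dT : measure_display) (T : measurableType dT) (P : probability T R)
  (ghat : 'rV[R]_d -> T -> 'rV[R]_d) (sigma : 'rV[R]_d -> 'rV[R]_d) (gamma : R)
  (hs : coord_smooth f L) (L0 : forall i, 0 <= L i) (g0 : 0 <= gamma)
  (mg : forall x (i : 'I_d), measurable_fun setT (fun w => ghat x w 0 i))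
  (hE : forall x (i : 'I_d),
      ('E_P[(fun w => ghat x w 0 i)%R] = (grad f x 0 i)%R%:E)%E)
  (hs0 : forall x (i : 'I_d), 0 <= sigma x 0 i)
  (hV : forall x (i : 'I_d),
      ('V_P[(fun w => ghat x w 0 i)%R] = ((sigma x 0 i) ^+ 2)%R%:E)%E)
  (hsym : forall x (i : 'I_d), symmetric_about P (fun w => ghat x w 0 i) (grad f x 0 i))
  (huni : forall x (i : 'I_d), unimodal_about P (fun w => ghat x w 0 i) (grad f x 0 i))
  x :
  Q P ghat gamma (fun y => f y - fstar) x + gamma / 3 * signsgd_measure (grad f) sigma x
  <= (f x - fstar) + gamma ^+ 2 / 2 * \sum_i L i.
Proof.
set C := gamma ^+ 2 / 2 * \sum_i L i.
set D := \sum_i grad f x 0 i *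
   (pr P [set w | 0 < ghat x w 0 i] - pr P [set w | ghat x w 0 i < 0]).
have H1 : Q P ghat gamma (fun y => f y - fstar) x <= (f x - fstar + C) - gamma * D.
  rewrite /Q.
  apply: (@le_trans _ _ (\sum_s pp P ghat x s *
     ((f x - fstar + C) - gamma * \sum_i grad f x 0 i * (val3 (s i) : R)))).
    apply: ler_sum => s _; apply: ler_wpM2l; first exact: pp_ge0.
    have hv : forall i, (vecs s : 'rV[R]_d) 0 i ^+ 2 <= 1 by move=> i; rewrite /vecs mxE val3_sq.
    have := smooth_step hs L0 g0 x hv.
    rewrite (_ : \sum_i grad f x 0 i * (vecs s : 'rV[R]_d) 0 i = \sum_i grad f x 0 i * val3 (s i)); last first.
      by apply: eq_bigr => i _; rewrite /vecs mxE.
    rewrite /C; lra.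
  rewrite (_ : \sum_s _ = (f x - fstar + C) - gamma * D) //.
  under eq_bigr do rewrite mulrBr.
  have hA : \sum_s pp P ghat x s * (f x - fstar + C) = f x - fstar + C.
    by rewrite -mulr_suml (psum P mg) mul1r.
  rewrite sumrB hA; congr (_ - _).
  rewrite /D mulr_sumr.
  under eq_bigr do rewrite mulrCA mulr_sumr.
  rewrite -!mulr_sumr; congr (_ * _); rewrite exchange_big /=; apply: eq_bigr => i _.
  rewrite -(marg P mg) mulr_sumr; apply: eq_bigr => s _; ring.
have H2 : 3^-1 * signsgd_measure (grad f) sigma x <= D.
  rewrite /signsgd_measure mulr_sumr; apply: ler_sum => i _.
  have := core (mg x i) (hE x i) (hV x i) (hs0 x i) (hsym x i) (huni x i). by [].
have H3 : gamma * (3^-1 * signsgd_measure (grad f) sigma x) <= gamma * D.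
  exact: ler_wpM2l.
rewrite -/C; move: H1 H3.
set M := signsgd_measure _ _ _.
set QQ := Q _ _ _ _ _.
have -> : gamma / 3 * M = gamma * (3^-1 * M) by rewrite mulrA.
lra.
Qed.

Lemma sum_delta (R : realType) (d : nat) (F : 'I_d -> R) (i : 'I_d) :
  \sum_j F j * (delta_mx 0 i : 'rV[R]_d) 0 j = F i.
Proof.
rewrite (bigD1 i) //= mxE !eqxx mulr1 big1 ?addr0 // => j hj.
by rewrite mxE eqxx (negbTE hj) mulr0.
Qed.

Lemma delta_sq (R : realType) (d : nat) (i j : 'I_d) :
  ((delta_mx 0 i : 'rV[R]_d) 0 j) ^+ 2 = (delta_mx 0 i : 'rV[R]_d) 0 j.
Proof. by rewrite mxE; case: (_ && _); rewrite ?expr1n ?expr0n. Qed.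

Lemma L_ge0 (R : realType) (d : nat) (f : 'rV[R]_d -> R) (L : 'I_d -> R) :
  coord_smooth f L -> forall i, 0 <= L i.
Proof.
move=> hs i; have := hs 0 (delta_mx 0 i).
rewrite (_ : \sum_j L j * ((delta_mx 0 i : 'rV[R]_d) 0 j - (0 : 'rV[R]_d) 0 j) ^+ 2 = L i).
  move=> h.
  have := le_trans (normr_ge0 _) h.
  by rewrite pmulr_rge0 // invr_gt0.
rewrite -[RHS](sum_delta L i); apply: eq_bigr => j _.
by rewrite [X in _ - X]mxE subr0 delta_sq.
Qed.

Lemma grad0 (R : realType) (d : nat) (f : 'rV[R]_d -> R) (L : 'I_d -> R) (fstar : R) :
  coord_smooth f L -> (forall i, L i = 0) -> (forall x, fstar <= f x) ->
  forall x i, grad f x 0 i = 0.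
Proof.
move=> hs hL hb x i; apply/eqP/negP => /negP gn0.
set g := grad f x 0 i.
set t := (fstar - f x - 1) / g.
have := hs x (x + t *: delta_mx 0 i).
rewrite (_ : \sum_j L j * _ = 0); last by apply: big1 => j _; rewrite hL mul0r.
rewrite mulr0.
rewrite (_ : \sum_j grad f x 0 j * ((x + t *: delta_mx 0 i) 0 j - x 0 j) = t * g); last first.
  transitivity (\sum_j (t * grad f x 0 j) * (delta_mx 0 i : 'rV[R]_d) 0 j).
    by apply: eq_bigr => j _; rewrite !mxE; ring.
  by rewrite (sum_delta (fun j => t * grad f x 0 j)).
rewrite normr_le0 subr_eq0 => /eqP hy.
have := hb (x + t *: delta_mx 0 i); rewrite hy /t.
have -> : (fstar - f x - 1) / g * g = fstar - f x - 1 by field.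
lra.
Qed.

Lemma summation (R : realType) (d : nat) (Qo : ('rV[R]_d -> R) -> 'rV[R]_d -> R)
  (lin : forall n r1 r2 a b, iter n Qo (fun y => a * r1 y + b * r2 y) =
        fun x => a * iter n Qo r1 x + b * iter n Qo r2 x)
  (cst : forall n c, iter n Qo (fun=> c) = fun=> c)
  (mono : forall n r1 r2, (forall y, r1 y <= r2 y) -> forall x, iter n Qo r1 x <= iter n Qo r2 x)
  (V M : 'rV[R]_d -> R) (c C : R)
  (pt : forall x, Qo V x + c * M x <= V x + C) x0 :
  forall n, iter n Qo V x0 + c * \sum_(k < n) iter k Qo M x0 <= V x0 + n%:R * C.
Proof.
elim => [|n IH]; first by rewrite big_ord0 /= mulr0 addr0 mul0r addr0.
rewrite big_ord_recr iterSr /=.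
have h1 : iter n Qo (Qo V) x0 + c * iter n Qo M x0 <= iter n Qo V x0 + C.
  have e1 := lin n (Qo V) M 1 c.
  have e2 := lin n V (fun=> 1) 1 C.
  have := mono n (fun y => 1 * Qo V y + c * M y) (fun y => 1 * V y + C * 1)
    (fun y => ltac:(simpl; rewrite !mul1r mulr1; exact: pt)) x0.
  rewrite e1 e2 cst !mul1r mulr1 //.
move: IH h1; rewrite -[n.+1]addn1 natrD.
set a := iter n Qo V x0; set b := iter n Qo (Qo V) x0.
set s := \sum_(i < n) _; set m := iter n Qo M x0.
move=> IH h1. nra.
Qed.

Lemma aux_sqrt2 (R : realType) (r : R) : 0 <= r -> r ^+ 2 = 2 -> 6 <= 5 * r.
Proof.
move=> r0 r2; case: (lerP 6 (5 * r)) => // h; exfalso.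
have h5 : 0 <= 6 - 5 * r by lra.
have h6 : 0 <= 6 + 5 * r by lra.
have := mulr_ge0 h5 h6.
rewrite (_ : (6 - 5 * r) * (6 + 5 * r) = 36 - 25 * r ^+ 2); last by ring.
rewrite r2 => h7.
have : (0:R) < 0 by nra.
by rewrite ltxx.
Qed.

Unset Implicit Arguments.
Theorem mainTheorem14 (R : realType) (d : nat)
  (f : 'rV[R]_d -> R) (fstar : R) (L : 'I_d -> R)
  (dT : measure_display) (T : measurableType dT) (P : probability T R)
  (ghat : 'rV[R]_d -> T -> 'rV[R]_d) (sigma : 'rV[R]_d -> 'rV[R]_d)
  (x0 : 'rV[R]_d) (K : nat) :
  (forall x, fstar <= f x) ->
  (forall x, differentiable f x) ->
  coord_smooth f L ->
  (forall x (i : 'I_d), measurable_fun setT (fun w => ghat x w 0 i)) ->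
  (forall x (i : 'I_d),
      P.-integrable setT (fun w => (ghat x w 0 i)%:E)) ->
  (forall x (i : 'I_d),
      P.-integrable setT (fun w => ((ghat x w 0 i) ^+ 2)%:E)) ->
  (forall x (i : 'I_d),
      ('E_P[(fun w => ghat x w 0 i)%R] = (grad f x 0 i)%R%:E)%E) ->
  (forall x (i : 'I_d), 0 <= sigma x 0 i) ->
  (forall x (i : 'I_d),
      ('V_P[(fun w => ghat x w 0 i)%R] = ((sigma x 0 i) ^+ 2)%R%:E)%E) ->
  (forall x (i : 'I_d), symmetric_about P (fun w => ghat x w 0 i) (grad f x 0 i)) ->
  (forall x (i : 'I_d), unimodal_about P (fun w => ghat x w 0 i) (grad f x 0 i)) ->
  (1 <= K)%N ->
  fstar < f x0 ->
  let Lbar := (\sum_i L i) / d%:R in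
  let gamma := Num.sqrt (2 * (f x0 - fstar) / (d%:R * Lbar * K%:R)) in
  ((K%:R)^-1%:E *
     \sum_(k < K) signsgd_expect P ghat gamma k
        (fun x => (signsgd_measure (grad f) sigma x)%:E) x0
   <= (5 * Num.sqrt (d%:R * Lbar * (f x0 - fstar) / K%:R))%:E)%E.
Proof.
move=> hb hdiff hs mg hi1 hi2 hE hs0 hV hsym huni hK hx0.
cbv zeta.
set gamma := Num.sqrt _.
have L0 := L_ge0 hs.
set M := signsgd_measure (grad f) sigma.
have M0 : forall x, 0 <= M x.
  move=> x; rewrite /M /signsgd_measure; apply: sumr_ge0 => i _.
  case: ifP => _; first exact: normr_ge0.
  by apply: divr_ge0; [exact: sqr_ge0|exact: hs0].
have g0 : 0 <= gamma by exact: sqrtr_ge0.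
under eq_bigr do rewrite /signsgd_expect (iterE P gamma mg _ M0).
rewrite sumEFin -EFinM lee_fin.
set S := \sum_i L i.
have S0 : 0 <= S by apply: sumr_ge0 => i _; exact: L0.
have Kp : (0 : R) < K%:R by rewrite ltr0n.
have [S0'|Sp] := eqVneq S 0.
  (* degenerate case: f is affine, gradient vanishes *)
  have hL : forall i, L i = 0.
    move=> i; have hS : \sum_i L i = 0 by rewrite -/S S0'.
    exact: (psumr_eq0P (fun j _ => L0 j) hS).
  have Mz : M = fun=> 0.
    apply/funext => x; rewrite /M /signsgd_measure; apply: big1 => i _.
    rewrite (grad0 hs hL hb) normr0 expr0n /= mul0r; by case: ifP.
  rewrite Mz; under eq_bigr do rewrite (iterQcst P gamma mg).
  rewrite big1 // mulr0 mulr_ge0 //; exact: sqrtr_ge0.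
have Sp' : 0 < S by rewrite lt0r Sp S0.
have dp : (0 : R) < d%:R.
  case: (posnP d) => [d0|]; last by rewrite ltr0n.
  have : S = 0 by rewrite /S big1 // => i _; have := ltn_ord i; rewrite {2}d0.
  by move: Sp'; rewrite lt0r => /andP [/eqP].
have dL : d%:R * ((\sum_i L i) / d%:R) = S.
  by rewrite /S; field; rewrite gt_eqF.
have gE : gamma = Num.sqrt (2 * (f x0 - fstar) / (S * K%:R)) by rewrite /gamma dL.
rewrite dL.
set V0 := f x0 - fstar.
have V0p : 0 < V0 by rewrite /V0 subr_gt0.
have g2 : gamma ^+ 2 = 2 * V0 / (S * K%:R).
  rewrite gE sqr_sqrtr //; apply: divr_ge0; first by apply: mulr_ge0 => //; exact: ltW.
  by apply: mulr_ge0; exact: ltW.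
have gp : 0 < gamma.
  rewrite gE sqrtr_gt0; apply: divr_gt0; first exact: mulr_gt0.
  exact: mulr_gt0.
pose V := fun y => f y - fstar.
have V0' : forall y, 0 <= V y by move=> y; rewrite /V subr_ge0.
have pt := perpoint fstar hs L0 g0 mg hE hs0 hV hsym huni.
have hsum := summation (iterQlin P ghat gamma) (iterQcst P gamma mg)
  (iterQmono P ghat gamma) pt x0 K.
have hVK := iterQ_ge0 P gamma mg K V0' x0.
move: hsum hVK.
rewrite -/V0 -/S -/M.
set B := \sum_(k < K) _.
set A := iter K _ _ x0.
move=> hsum hVK.
have hB : gamma * B <= 6 * V0.
  have e : K%:R * (gamma ^+ 2 / 2 * S) = V0.
    by rewrite g2; field; apply/andP; split; rewrite gt_eqF.
  rewrite e in hsum. 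
  have : gamma / 3 * B <= 2 * V0 by lra.
  rewrite mulrAC => h.
  have : gamma * B / 3 * 3 <= 2 * V0 * 3 by rewrite ler_pM2r.
  rewrite divfK; last by [].
  lra.
set u := Num.sqrt (S * V0 / K%:R).
have up : 0 < u.
  rewrite /u sqrtr_gt0; apply: divr_gt0 => //; exact: mulr_gt0.
have gu : gamma * u = Num.sqrt 2 * (V0 / K%:R).
  rewrite gE -/V0 /u -sqrtrM; last first.
    apply: divr_ge0; first by apply: mulr_ge0 => //; exact: ltW.
    by apply: mulr_ge0; exact: ltW.
  rewrite (_ : 2 * V0 / (S * K%:R) * (S * V0 / K%:R) = 2 * (V0 / K%:R) ^+ 2); last first.
    field; apply/andP; split; rewrite gt_eqF //.
  rewrite sqrtrM // sqrtr_sqr ger0_norm //; exact: divr_ge0 (ltW V0p) (ltW Kp).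
have s2 : 6 <= 5 * Num.sqrt (2 : R).
  by apply: aux_sqrt2; [exact: sqrtr_ge0|rewrite sqr_sqrtr].
rewrite ler_pdivrMl //.
rewrite -(ler_pM2l gp).
have e2 : gamma * (K%:R * (5 * u)) = 5 * K%:R * (gamma * u) by ring.
rewrite e2 gu.
have e3 : 5 * K%:R * (Num.sqrt 2 * (V0 / K%:R)) = 5 * Num.sqrt 2 * V0.
  by field; rewrite gt_eqF.
rewrite e3.
nra.
Qed.
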